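(* Let $k$ be a commutative ring and $A$ a commutative $k$-algebra. The injective $A$-linear map $$\theta_{A/k}=\bigoplus_{n\ge0}\theta_n:\operatorname{gr}\operatorname{Diff}_{A/k}\to(\operatorname{Sym}\Omega_{A/k})^*_{gr}$$ is a homomorphism of graded $A$-algebras, where $(\operatorname{Sym}\Omega_{A/k})^*_{gr}$ carries the shuffle product.
   Context: $\operatorname{Diff}^{(0)}_{A/k}$ = multiplications by elements of $A$; $\operatorname{Diff}^{(i+1)}_{A/k}=\{\varphi\in\operatorname{End}_k(A):[\varphi,a]\in\operatorname{Diff}^{(i)}_{A/k}\ \forall a\in A\}$, $[\varphi,a]=\varphi\circ a-a\circ\varphi$; $\operatorname{Diff}_{A/k}=\bigcup_i\operatorname{Diff}^{(i)}_{A/k}$ is a filtered ring whose associated graded ring $\operatorname{gr}\operatorname{Diff}_{A/k}=\bigoplus_n\operatorname{Diff}^{(n)}/\operatorname{Diff}^{(n-1)}$ ($\operatorname{Diff}^{(-1)}=0$) is a commutative graded $A$-algebra; $\sigma_n(P)$ denotes the class of $P\in\operatorname{Diff}^{(n)}$. $\Omega_{A/k}$ is the module of Kähler differentials, $d:A\to\Omega_{A/k}$. $(\operatorname{Sym}\Omega)^*_{gr}=\bigoplus_n\operatorname{Hom}_A(\operatorname{Sym}^n\Omega,A)$ with shuffle product $(u\star v)(\prod_{l=1}^{i+j}\omega_l)=\sum_{L\subset[i+j],\sharp L=i}u(\omega_L)v(\omega_{[i+j]\setminus L})$, $\omega_L=\prod_{l\in L}\omega_l$. For $P\in\operatorname{Diff}^{(n)}$,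 $\theta_n(\sigma_n(P))$ is the $A$-linear form on $\operatorname{Sym}^n\Omega_{A/k}$ determined by $dx_1\cdots dx_n\mapsto\sum_{L\subset[n]}(-1)^{\sharp L}x_LP(x_{[n]\setminus L})$ ($x_L=\prod_{i\in L}x_i$); this is well defined, depends only on $\sigma_n(P)$, and $\theta_n$ is injective. *)

(* Defs.v *)
From HB Require Import structures.
From mathcomp Require Import all_boot all_order all_algebra.
Set Implicit Arguments. Unset Strict Implicit. Unset Printing Implicit Defensive.
Import GRing.Theory.
Local Open Scope ring_scope.

Section DiffOps.
Variables (k : comPzRingType) (A : comAlgType k).

Definition klin (P : A -> A) : Prop :=
  forall (c : k) (x y : A), P (c *: x + y) = c *: P x + P y.

Fixpoint isDiff (n : nat) (P : A -> A) : Prop :=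
  klin P /\
  match n with
  | 0 => exists a : A, forall x, P x = a * x
  | n'.+1 => forall a : A, isDiff n' (fun x => P (a * x) - a * P x)
  end.

(* An A-linear form u on Sym^n Omega_{A/k} is represented by its values on
   the monomials dx_1 ... dx_n, i.e. by u [:: x_1; ...; x_n]
   (these monomials generate Sym^n Omega as an A-module).
   theta_form P s = theta_n(sigma_n(P))(dx_1 ... dx_n) for s = [:: x_1; ...; x_n]:
     sum_{L subset [n]} (-1)^{#L} x_L P(x_{[n]\L}). *)
Definition theta_form (P : A -> A) (s : seq A) : A :=
  \sum_(L : {set 'I_(size s)})
     (-1) ^+ #|L| * (\prod_(l in L) s`_l) * P (\prod_(l in ~: L) s`_l).

Definition shuffle (i : nat) (u v : seq A -> A) (s : seq A) : A :=
  \sum_(L : {set 'I_(size s)} | #|L| == i)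
     u [seq s`_(nat_of_ord l) | l <- enum L] * v [seq s`_(nat_of_ord l) | l <- enum (~: L)].

End DiffOps.

(* Main.v *)
Require Import Defs.
From HB Require Import structures.
From mathcomp Require Import all_boot all_order all_algebra.
Import GRing.Theory.
Local Open Scope ring_scope.
Set Implicit Arguments. Unset Strict Implicit. Unset Printing Implicit Defensive.

Definition mseq n (L : {set 'I_n}) : seq bool := [seq l \in L | l <- enum 'I_n].

Lemma enum_filter n (L : {set 'I_n}) : enum L = filter (mem L) (enum 'I_n).
Proof. by rewrite enumT. Qed.

Lemma enum_mask (T : Type) (x0 : T) (s : seq T) (L : {set 'I_(size s)}) :
  [seq nth x0 s (nat_of_ord l) | l <- enum L] = mask (mseq L) s.
Proof.
rewrite enum_filter filter_mask map_mask; congr mask.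
have -> : [seq nth x0 s (nat_of_ord l) | l <- enum 'I_(size s)]
   = [seq nth x0 s i | i <- map val (enum 'I_(size s))] by rewrite -map_comp.
by rewrite val_enum_ord -/(mkseq _ _) mkseq_nth.
Qed.

Lemma mseqC n (L : {set 'I_n}) : mseq (~: L) = map negb (mseq L).
Proof. by rewrite /mseq -map_comp; apply: eq_map => l /=; rewrite in_setC. Qed.

Lemma card_mseq n (L : {set 'I_n}) : #|L| = count id (mseq L).
Proof. by rewrite cardE enum_filter size_filter /mseq count_map. Qed.

Definition hl n (L : {set 'I_n}) : {set 'I_n.+1} := [set lift ord0 i | i in L].
Definition phi n (p : bool * {set 'I_n}) : {set 'I_n.+1} :=
  if p.1 then ord0 |: hl p.2 else hl p.2.
Definition psi n (L : {set 'I_n.+1}) : bool * {set 'I_n} :=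
  (ord0 \in L, [set i | lift ord0 i \in L]).

Lemma ord0_hl n (L : {set 'I_n}) : (ord0 \in hl L) = false.
Proof. by apply/negP => /imsetP [i _ E]; move: (neq_lift ord0 i); rewrite -E eqxx. Qed.

Lemma lift_hl n (L : {set 'I_n}) i : (lift ord0 i \in hl L) = (i \in L).
Proof. by rewrite mem_imset //; apply: lift_inj. Qed.

Lemma phi_bij n : bijective (@phi n).
Proof.
exists (@psi n).
  move=> [b L]; rewrite /psi /phi /=; case: b => /=.
    rewrite setU11; congr pair; apply/setP => i; rewrite inE in_setU1 lift_hl.
    by rewrite eq_sym (negbTE (neq_lift _ _)).
  rewrite ord0_hl; congr pair; apply/setP => i; by rewrite inE lift_hl.
move=> L; rewrite /psi /phi /=; apply/setP => j.
case: (ord0 \in L) / boolP => H.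
  rewrite in_setU1; case: (unliftP ord0 j) => [i ->|->]; last by rewrite eqxx H.
  by rewrite eq_sym (negbTE (neq_lift _ _)) lift_hl inE.
case: (unliftP ord0 j) => [i ->|->]; first by rewrite lift_hl inE.
by rewrite ord0_hl (negbTE H).
Qed.

Lemma mseq_hl n (L : {set 'I_n}) : mseq (hl L) = false :: mseq L.
Proof.
rewrite /mseq enum_ordSl /= ord0_hl -map_comp; congr cons.
by apply: eq_map => i /=; rewrite lift_hl.
Qed.

Lemma mseq_hl1 n (L : {set 'I_n}) : mseq (ord0 |: hl L) = true :: mseq L.
Proof.
rewrite /mseq enum_ordSl /= setU11 -map_comp; congr cons.
apply: eq_map => i /=; rewrite in_setU1 lift_hl.
by rewrite eq_sym (negbTE (neq_lift _ _)).
Qed.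

Lemma sum_split (R : nmodType) n (G : seq bool -> R) :
  \sum_(L : {set 'I_n.+1}) G (mseq L)
  = \sum_(L : {set 'I_n}) (G (false :: mseq L) + G (true :: mseq L)).
Proof.
rewrite (reindex (@phi n)); last exact: onW_bij (phi_bij n).
rewrite big_split /= addrC.
rewrite (eq_bigr (fun p => G (mseq (phi (p.1, p.2))))); last by case.
rewrite -(pair_big xpredT xpredT (fun b L => G (mseq (phi (b, L))))) /=.
rewrite big_bool /phi /=.
by congr (_ + _); apply: eq_bigr => L _; rewrite ?mseq_hl1 ?mseq_hl.
Qed.

Section Main.
Variables (k : comPzRingType) (A : comAlgType k).

Definition comm (x : A) (P : A -> A) : A -> A := fun y => P (x * y) - x * P y.

Fixpoint Th (s : seq A) (P : A -> A) : A :=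
  match s with [::] => P 1 | x :: s' => Th s' (comm x P) end.

Fixpoint sh (s : seq A) (i : nat) (u v : seq A -> A) : A :=
  match s with
  | [::] => if (0 == i)%N then u [::] * v [::] else 0
  | x :: s' => (if i is i'.+1 then sh s' i' (fun t => u (x :: t)) v else 0)
               + sh s' i u (fun t => v (x :: t))
  end.

Definition Tm (P : A -> A) (s : seq A) (m : seq bool) : A :=
  (-1) ^+ (count id m) * \prod_(y <- mask m s) y * P (\prod_(y <- mask (map negb m) s) y).

Definition Sm (i : nat) (u v : seq A -> A) (s : seq A) (m : seq bool) : A :=
  if (count id m == i)%N then u (mask m s) * v (mask (map negb m) s) else 0.

Lemma prod_set (s : seq A) (L : {set 'I_(size s)}) :
  \prod_(l in L) s`_l = \prod_(y <- mask (mseq L) s) y.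
Proof. by rewrite -big_enum -(enum_mask 0) big_map. Qed.

Lemma sum_set0 (R : nmodType) (G : seq bool -> R) :
  \sum_(L : {set 'I_0}) G (mseq L) = G [::].
Proof.
rewrite (big_pred1 set0) => [|L /=]; last by apply/esym/eqP/setP => -[].
suff -> : mseq (set0 : {set 'I_0}) = [::] by [].
by apply/size0nil; rewrite size_map size_enum_ord.
Qed.

Lemma theta_Th (P : A -> A) (s : seq A) : theta_form P s = Th s P.
Proof.
have -> : theta_form P s = \sum_(L : {set 'I_(size s)}) Tm P s (mseq L).
  apply: eq_bigr => L _; by rewrite /Tm card_mseq !prod_set mseqC.
elim: s P => [|x s IH] P; first by rewrite sum_set0 /Tm /= !big_nil expr0 !mul1r.
rewrite /= sum_split -IH; apply: eq_bigr => L _.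
rewrite /Tm /comm /= !big_cons exprS.
set c := (-1) ^+ _; set X := \prod_(y <- _) y; set Y := \prod_(y <- _) y.
rewrite mulN1r mulNr mulrBr; congr (_ + _).
by rewrite mulNr -!mulrA [x * (X * _)]mulrCA.
Qed.

Lemma shuffle_sh (i : nat) (u v : seq A -> A) (s : seq A) :
  shuffle i u v s = sh s i u v.
Proof.
have -> : shuffle i u v s = \sum_(L : {set 'I_(size s)}) Sm i u v s (mseq L).
  rewrite /shuffle big_mkcond; apply: eq_bigr => L _.
  by rewrite /Sm card_mseq (enum_mask 0) -mseqC (enum_mask 0).
elim: s i u v => [|x s IH] i u v; first by rewrite sum_set0.
rewrite /= sum_split big_split /= addrC -IH; congr (_ + _).
case: i => [|i]; first by rewrite big1.
by rewrite -IH.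
Qed.

Lemma Th_ext (s : seq A) (F G : A -> A) : (forall y, F y = G y) -> Th s F = Th s G.
Proof.
elim: s F G => [|x s IH] F G E /=; first exact: E.
by apply: IH => y; rewrite /comm !E.
Qed.

Lemma Th_add (s : seq A) (F G : A -> A) :
  Th s (fun y => F y + G y) = Th s F + Th s G.
Proof.
elim: s F G => [|x s IH] F G //=.
rewrite -IH; apply: Th_ext => y; rewrite /comm mulrDr opprD addrACA //.
Qed.

Lemma Th_zero (s : seq A) : Th s (fun _ => 0) = 0.
Proof.
elim: s => [|x s IH] //=.
by rewrite -{2}IH; apply: Th_ext => y; rewrite /comm mulr0 subr0.
Qed.

Lemma sh_ext (s : seq A) i (u u' v v' : seq A -> A) :
  (forall t, u t = u' t) -> (forall t, v t = v' t) -> sh s i u v = sh s i u' v'.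
Proof.
elim: s i u u' v v' => [|x s IH] i u u' v v' Eu Ev /=; first by rewrite Eu Ev.
congr (_ + _); last exact: IH.
by case: i => // i; apply: IH.
Qed.

Lemma sh_v0 (s : seq A) i (u : seq A -> A) : sh s i u (fun _ => 0) = 0.
Proof.
elim: s i u => [|x s IH] i u /=; first by case: (0 == i)%N; rewrite ?mulr0.
by rewrite IH; case: i => [|i]; rewrite ?IH addr0.
Qed.

Lemma klin_sub (P : A -> A) : klin P -> forall a b, P (a - b) = P a - P b.
Proof.
move=> hP a b; have := hP (-1) b a.
by rewrite !scaleN1r addrC => ->; rewrite addrC.
Qed.

Lemma isDiff_klin n (P : A -> A) : isDiff n P -> klin P.
Proof. by case: n => [|n] []. Qed.

Lemma main_lemma (s : seq A) : forall i j (P Q : A -> A),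
  isDiff i P -> isDiff j Q -> size s = (i + j)%N ->
  Th s (fun y => P (Q y)) = sh s i (fun t => Th t P) (fun t => Th t Q).
Proof.
elim: s => [|x s IH] i j P Q hP hQ hs.
  case: i hP hs => [|//] hP; case: j hQ => [|//] hQ _.
  case: hP => _ [a Ea] /=; by rewrite !Ea mulr1.
have E : forall y, comm x (fun y => P (Q y)) y = comm x P (Q y) + P (comm x Q y).
  by move=> y; rewrite /comm (klin_sub (isDiff_klin hP)) [RHS]addrC addrA subrK.
rewrite /= (Th_ext s E) Th_add; congr (_ + _).
  case: i hP hs => [|i] hP hs.
    case: hP => _ [a Ea]; rewrite -(Th_zero s); apply: Th_ext => y.
    by rewrite /comm !Ea mulrCA subrr.
  apply: (IH i j (comm x P) Q (hP.2 x) hQ); by move: hs => /= [->].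
case: j hQ hs => [|j] hQ hs.
  case: hQ => _ [b Eb].
  have Z : forall y, comm x Q y = 0 by move=> y; rewrite /comm !Eb mulrCA subrr.
  have P0 : P 0 = 0 by have := klin_sub (isDiff_klin hP) 0 0; rewrite !subrr.
  rewrite (@Th_ext s _ (fun _ => 0)); last by move=> y; rewrite Z P0.
  rewrite Th_zero -(sh_v0 s i (fun t => Th t P)); apply: sh_ext => // t.
  by rewrite /= (@Th_ext _ _ (fun _ => 0)) ?Th_zero.
apply: (IH i j P (comm x Q) hP (hQ.2 x)); by move: hs; rewrite /= addnS => -[].
Qed.
End Main.

Theorem mainTheorem6 (k : comPzRingType) (A : comAlgType k) :
  [/\ forall (n : nat) (P Q : A -> A) (a : A),
        isDiff n P -> isDiff n Q ->
        forall s : seq A, size s = n ->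
          theta_form (fun x => a * P x + Q x) s
            = a * theta_form P s + theta_form Q s,
      forall (i j : nat) (P Q : A -> A),
        isDiff i P -> isDiff j Q ->
        forall s : seq A, size s = (i + j)%N ->
          theta_form (fun x => P (Q x)) s
            = shuffle i (theta_form P) (theta_form Q) s
    & theta_form (fun x : A => x) [::] = 1].
Proof.
split.
- move=> n P Q a _ _ s _; rewrite /theta_form mulr_sumr -big_split /=.
  by apply: eq_bigr => L _; rewrite mulrDr [_ * (a * _)]mulrCA.
- move=> i j P Q hP hQ s hs; rewrite shuffle_sh theta_Th (main_lemma hP hQ hs).
  by apply: sh_ext => t; rewrite theta_Th.
- by rewrite theta_Th.
Qed.
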